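(* For every integer $t\ge1$, $$-\frac{11}{10t}<\frac{S_2(t)}{\binom{-3/2}{t}}-\frac{(-1)^t}{\binom{-3/2}{t}}\cosh\alpha+\frac{\sinh\alpha}{\alpha}<\frac1t.$$
   Context: $\alpha=\pi/6$. $(a)_m=a(a+1)\cdots(a+m-1)$ is the rising factorial ($(a)_0=1$); $\binom{x}{m}=x(x-1)\cdots(x-m+1)/m!$ for $m\ge1$, $\binom{x}{0}=1$. For $t\ge1$, $$S_2(t)=\sum_{s=0}^{t-1}(1/2-s)_{s+1}\binom{-3/2}{t-s-1}\sum_{u=0}^s\frac{(-1)^u(-s)_u}{(s+u+1)!\,(2u)!}\left(\frac{\pi^2}{36}\right)^u.$$ *)

(* Defs.v *)
From Stdlib Require Import Reals Arith.
Open Scope R_scope.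

Definition alpha : R := PI / 6.

Fixpoint rising (a : R) (m : nat) : R :=
  match m with
  | O => 1
  | S k => rising a k * (a + INR k)
  end.

Fixpoint falling (x : R) (m : nat) : R :=
  match m with
  | O => 1
  | S k => falling x k * (x - INR k)
  end.

Definition gbinom (x : R) (m : nat) : R := falling x m / INR (fact m).

Fixpoint sumR (n : nat) (f : nat -> R) : R :=
  match n with
  | O => 0
  | S k => sumR k f + f k
  end.

Definition S2 (t : nat) : R :=
  sumR t (fun s =>
    rising (1/2 - INR s) (s + 1) * gbinom (-3/2) (t - s - 1) *
    sumR (s + 1) (fun u =>
      (-1) ^ u * rising (- INR s) u
        / (INR (fact (s + u + 1)) * INR (fact (2 * u)))
        * (PI ^ 2 / 36) ^ u)).

(* Main.v *)
Require Import Defs.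
From Stdlib Require Import Reals Arith Factorial Lra Lia Psatz.
Open Scope R_scope.

Definition fr (n : nat) : R := INR (fact n).
Lemma fr_pos n : 0 < fr n.
Proof. unfold fr. apply lt_0_INR, lt_O_fact. Qed.
Lemma fr_nz n : fr n <> 0.
Proof. apply Rgt_not_eq, fr_pos. Qed.
Lemma frS n : fr (S n) = (INR n + 1) * fr n.
Proof. unfold fr. rewrite fact_simpl, mult_INR, S_INR. reflexivity. Qed.
Lemma frS2 n : fr (S (S n)) = (INR n + 2) * (INR n + 1) * fr n.
Proof. rewrite !frS, S_INR. ring. Qed.

Lemma fr0 : fr 0 = 1.
Proof. reflexivity. Qed.

Definition KK (v : nat) : R := 2 / ((2 * INR v + 1) * (2 * INR v + 3)).
Definition Fd (u n k : nat) : R :=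
  2 * (2 * INR u + 2) * fr (2 * (n - k) + 1) * fr (2 * u + 2 * k) /
  (fr (n - k) ^ 2 * fr k * fr (2 * u + k + 2)).
Definition HH (u n : nat) : R := KK u * fr (2 * u + 2 * n + 3) / (fr n * fr (2 * u + n + 2)).
Definition Qp (u n : nat) (K : R) : R :=
  let U := INR u in let N := INR n in
  (-12 - 18*U - 6*U^2 - 14*N - 18*N*U - 4*N*U^2 - 4*N^2 - 4*N^2*U)
  + (2 + 9*U + 4*U^2 - 3*N + 2*N*U - 2*N^2) * K + (4 + 2*U + 2*N) * K^2.
Definition Gc (u n k : nat) : R := INR k * Qp u n (INR k) / INR (n + 1 - k) * Fd u n k.
Definition Gend (u n : nat) : R :=
  Qp u n (INR n + 1) * (2 * INR u + 2) * fr (2 * u + 2 * n + 2) / (fr n * fr (2 * u + n + 3)).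
Definition p0 (u n : nat) : R := - (2 * (INR u + 1 + INR n) + 3) * (INR u + 1 + INR n + 1) ^ 2.
Definition p1 (u n : nat) : R := (INR u + 1 + INR n + 1) * (INR n + 1) * (2 * INR u + INR n + 3) / 2.

Ltac inr_simpl := repeat rewrite ?S_INR, ?plus_INR, ?mult_INR, ?INR_0 in *; simpl INR in *.

Lemma cert u k m :
  p0 u (S (k + m)) * Fd u (S (k + m)) k + p1 u (S (k + m)) * Fd u (S (S (k + m))) k
  = Gc u (S (k + m)) (S k) - Gc u (S (k + m)) k.
Proof.
  unfold Gc, Fd, p0, p1.
  replace (S (k + m) - k)%nat with (S m) by lia.
  replace (S (S (k + m)) - k)%nat with (S (S m)) by lia.
  replace (S (k + m) - S k)%nat with m by lia.
  replace (S (k + m) + 1 - S k)%nat with (S m) by lia.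
  replace (S (k + m) + 1 - k)%nat with (S (S m)) by lia.
  replace (2 * S m + 1)%nat with (S (S (2 * m + 1))) by lia.
  replace (2 * S (S m) + 1)%nat with (S (S (S (S (2 * m + 1))))) by lia.
  replace (2 * u + 2 * S k)%nat with (S (S (2 * u + 2 * k))) by lia.
  replace (2 * u + S k + 2)%nat with (S (2 * u + k + 2)) by lia.
  repeat rewrite ?frS2, ?frS.
  unfold Qp.
  inr_simpl.
  field.
  repeat split; try apply fr_nz; generalize (pos_INR u) (pos_INR k) (pos_INR m); intros; nra.
Qed.

Lemma cert_last u n :
  p0 u n * Fd u n n + p1 u n * Fd u (S n) n = Gend u n - Gc u n n.
Proof.
  unfold Gc, Fd, p0, p1, Gend.
  rewrite Nat.sub_diag.
  replace (S n - n)%nat with 1%nat by lia.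
  replace (n + 1 - n)%nat with 1%nat by lia.
  replace (2 * u + 2 * n + 2)%nat with (S (S (2 * u + 2 * n))) by lia.
  replace (2 * u + n + 3)%nat with (S (2 * u + n + 2)) by lia.
  replace (2 * 1 + 1)%nat with 3%nat by lia.
  replace (2 * 0 + 1)%nat with 1%nat by lia.
  repeat rewrite ?frS2, ?frS.
  unfold Qp, fr. simpl fact. inr_simpl. fold (fr (2 * u + 2 * n)) (fr n) (fr (2 * u + n + 2)).
  field.
  repeat split; try apply fr_nz; generalize (pos_INR u) (pos_INR n); intros; nra.
Qed.

Lemma hstep u n :
  p0 u n * HH u n + p1 u n * (HH u (S n) - Fd u (S n) (S n)) = Gend u n.
Proof.
  unfold HH, KK, Fd, p0, p1, Gend.
  rewrite Nat.sub_diag.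
  replace (2 * u + 2 * n + 3)%nat with (S (S (S (2 * u + 2 * n)))) by lia.
  replace (2 * u + 2 * S n + 3)%nat with (S (S (S (S (S (2 * u + 2 * n)))))) by lia.
  replace (2 * u + 2 * S n)%nat with (S (S (2 * u + 2 * n))) by lia.
  replace (2 * u + 2 * n + 2)%nat with (S (S (2 * u + 2 * n))) by lia.
  replace (2 * u + n + 3)%nat with (S (2 * u + n + 2)) by lia.
  replace (2 * u + S n + 2)%nat with (S (2 * u + n + 2)) by lia.
  replace (2 * 0 + 1)%nat with 1%nat by lia.
  repeat rewrite ?frS2, ?frS.
  unfold Qp, fr. simpl fact. inr_simpl. fold (fr (2 * u + 2 * n)) (fr n) (fr (2 * u + n + 2)).
  field.
  repeat split; try apply fr_nz; generalize (pos_INR u) (pos_INR n); intros; nra.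
Qed.

Lemma sumR_ext N f g : (forall k, (k < N)%nat -> f k = g k) -> sumR N f = sumR N g.
Proof.
  induction N as [|N IH]; intros H; simpl; [reflexivity|].
  rewrite IH by (intros; apply H; lia). rewrite H by lia. reflexivity.
Qed.
Lemma sumR_tele N g : sumR N (fun k => g (S k) - g k) = g N - g 0%nat.
Proof. induction N as [|N IH]; simpl; [ring|rewrite IH; ring]. Qed.
Lemma sumR_lin N a b f g : sumR N (fun k => a * f k + b * g k) = a * sumR N f + b * sumR N g.
Proof. induction N as [|N IH]; simpl; [ring|rewrite IH; ring]. Qed.
Lemma sumR_plus N f g : sumR N (fun k => f k + g k) = sumR N f + sumR N g.
Proof. induction N as [|N IH]; simpl; [ring|rewrite IH; ring]. Qed.
Lemma sumR_scal N a f : sumR N (fun k => a * f k) = a * sumR N f.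
Proof. induction N as [|N IH]; simpl; [ring|rewrite IH; ring]. Qed.
Lemma sumR_shift0 N f : sumR (S N) f = f 0%nat + sumR N (fun k => f (S k)).
Proof. induction N as [|N IH]; [simpl; ring|]. change (sumR (S (S N)) f) with (sumR (S N) f + f (S N)). rewrite IH. simpl. ring. Qed.

Definition Gx (u n k : nat) : R := if (k <=? n)%nat then Gc u n k else Gend u n.

Lemma Dsum_eq u n : sumR (S n) (Fd u n) = HH u n.
Proof.
  induction n as [|n IH].
  - cbn [sumR]. unfold Fd, HH, KK. rewrite Nat.sub_diag.
    replace (2 * u + 2 * 0 + 3)%nat with (S (S (S (2 * u)))) by lia.
    replace (2 * u + 2 * 0)%nat with (2 * u)%nat by lia.
    replace (2 * u + 0 + 2)%nat with (S (S (2 * u))) by lia.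
    replace (2 * 0 + 1)%nat with 1%nat by lia.
    repeat rewrite ?frS2, ?frS. rewrite fr0. inr_simpl.
    field. repeat split; try apply fr_nz; generalize (pos_INR u); intros; nra.
  - assert (Hsum : sumR (S n) (fun k => p0 u n * Fd u n k + p1 u n * Fd u (S n) k) = Gend u n).
    { rewrite (sumR_ext (S n) _ (fun k => Gx u n (S k) - Gx u n k)).
      - rewrite sumR_tele. unfold Gx.
        rewrite (proj2 (Nat.leb_gt (S n) n)) by lia. rewrite (proj2 (Nat.leb_le 0 n)) by lia.
        unfold Gc. rewrite INR_0. unfold Rdiv. ring.
      - intros k Hk. unfold Gx. destruct (Nat.eq_dec k n) as [->|Hne].
        + rewrite (proj2 (Nat.leb_gt (S n) n)) by lia. rewrite (proj2 (Nat.leb_le n n)) by lia.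
          apply cert_last.
        + destruct (Nat.lt_exists_pred 0 (n - k) ltac:(lia)) as [m [Hm _]].
          replace n with (S (k + m)) by lia.
          rewrite (proj2 (Nat.leb_le (S k) (S (k + m)))) by lia. rewrite (proj2 (Nat.leb_le k (S (k + m)))) by lia.
          apply cert. }
    rewrite sumR_lin, IH in Hsum.
    change (sumR (S (S n)) (Fd u (S n))) with (sumR (S n) (Fd u (S n)) + Fd u (S n) (S n)).
    pose proof (hstep u n) as Hh.
    assert (Hp : 0 < p1 u n).
    { unfold p1. generalize (pos_INR u) (pos_INR n); intros. apply Rmult_lt_0_compat; [|lra].
      apply Rmult_lt_0_compat; [|lra]. apply Rmult_lt_0_compat; lra. }
    apply Rmult_eq_reg_l with (p1 u n); [|lra]. nra.
Qed.

Definition Fk (u n k : nat) : R :=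
  2 * fr (2 * (n - k) + 1) * fr (2 * u + 2 * k) / (fr (n - k) ^ 2 * fr k * fr (2 * u + k + 1)).
Definition Rj (u n j : nat) : R :=
  KK (u + j) * fr (2 * u + 2 * n + 3) / (fr (n - j) * fr (2 * u + n + j + 2)).

Lemma Fk_split u n k : (k <= n)%nat -> Fk u (S n) (S k) = Fd u (S n) (S k) + Fk (S u) n k.
Proof.
  intro Hk. unfold Fk, Fd. change (S n - S k)%nat with (n - k)%nat.
  replace (2 * S u + 2 * k)%nat with (2 * u + 2 * S k)%nat by lia.
  replace (2 * u + S k + 2)%nat with (S (2 * u + S k + 1)) by lia.
  replace (2 * S u + k + 1)%nat with (S (2 * u + S k + 1)) by lia.
  repeat rewrite ?frS. inr_simpl.
  field. repeat split; try apply fr_nz; generalize (pos_INR u) (pos_INR k); intros; nra.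
Qed.

Lemma Fk_0 u n : Fk u n 0 = Fd u n 0.
Proof.
  unfold Fk, Fd. replace (2 * u + 0 + 2)%nat with (S (2 * u + 0 + 1)) by lia.
  repeat rewrite ?frS. inr_simpl. rewrite fr0.
  field. repeat split; try apply fr_nz; generalize (pos_INR u); intros; nra.
Qed.

Lemma Rj_0 u n : Rj u n 0 = HH u n.
Proof.
  unfold Rj, HH. rewrite Nat.add_0_r, Nat.sub_0_r, Nat.add_0_r. reflexivity.
Qed.

Lemma Rj_S u n j : Rj u (S n) (S j) = Rj (S u) n j.
Proof.
  unfold Rj. change (S n - S j)%nat with (n - j)%nat.
  replace (u + S j)%nat with (S u + j)%nat by lia.
  replace (2 * u + 2 * S n + 3)%nat with (2 * S u + 2 * n + 3)%nat by lia.
  replace (2 * u + S n + S j + 2)%nat with (2 * S u + n + j + 2)%nat by lia.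
  reflexivity.
Qed.

Lemma Iprime n : forall u, sumR (S n) (Fk u n) = sumR (S n) (Rj u n).
Proof.
  induction n as [|n IH]; intro u.
  - cbn [sumR]. rewrite Rj_0. rewrite Fk_0. rewrite <- (Dsum_eq u 0). cbn [sumR]. ring.
  - rewrite (sumR_shift0 (S n) (Fk u (S n))), (sumR_shift0 (S n) (Rj u (S n))). rewrite Rj_0, Fk_0.
    rewrite (sumR_ext (S n) (fun k => Fk u (S n) (S k)) (fun k => Fd u (S n) (S k) + Fk (S u) n k))
      by (intros; apply Fk_split; lia).
    rewrite (sumR_ext (S n) (fun j => Rj u (S n) (S j)) (Rj (S u) n)) by (intros; apply Rj_S).
    rewrite sumR_plus, <- IH.
    rewrite <- (Dsum_eq u (S n)). rewrite (sumR_shift0 (S n) (Fd u (S n))). ring.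
Qed.

Definition WW (t v : nat) : R := fr t ^ 2 / (fr (t - 1 - v) * fr (t + 1 + v)).
Definition ZZ (t : nat) : R := sumR t (fun v => KK v * WW t v).
Definition ff (t : nat) : R := 4 ^ t * fr t ^ 2 / fr (2 * t + 1).
Definition Gzc (t v : nat) : R := - (INR t + 1) * (2 * INR v + 3) / (2 * INR (t - v)) * (KK v * WW t v).
Definition Gzend (t : nat) : R := - (INR t + 1) * (2 * INR t + 3) / 2 * KK t * fr t ^ 2 / fr (2 * t + 1).
Definition Gzx (t v : nat) : R := if (v <? t)%nat then Gzc t v else Gzend t.

Lemma zcert v m : let t := S (S (v + m)) in
  (2 * INR t + 3) * (KK v * WW (S t) v) - (2 * INR t + 2) * (KK v * WW t v) = Gzc t (S v) - Gzc t v.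
Proof.
  intro t. unfold t, Gzc, WW, KK.
  replace (S (S (S (v + m))) - 1 - v)%nat with (S (S m)) by lia.
  replace (S (S (v + m)) - 1 - v)%nat with (S m) by lia.
  replace (S (S (v + m)) - 1 - S v)%nat with m by lia.
  replace (S (S (v + m)) - S v)%nat with (S m) by lia.
  replace (S (S (v + m)) - v)%nat with (S (S m)) by lia.
  replace (S (S (S (v + m))) + 1 + v)%nat with (S (S (S (v + m)) + 1 + v)) by lia.
  replace (S (S (v + m)) + 1 + S v)%nat with (S (S (S (v + m)) + 1 + v)) by lia.
  repeat rewrite ?frS2, ?frS. inr_simpl.
  field. repeat split; try apply fr_nz; generalize (pos_INR v) (pos_INR m); intros; nra.
Qed.

Lemma zcert_last v : let t := S v in
  (2 * INR t + 3) * (KK v * WW (S t) v) - (2 * INR t + 2) * (KK v * WW t v) = Gzend t - Gzc t v.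
Proof.
  intro t. unfold t, Gzc, Gzend, WW, KK.
  replace (S (S v) - 1 - v)%nat with 1%nat by lia.
  replace (S v - 1 - v)%nat with 0%nat by lia.
  replace (S v - v)%nat with 1%nat by lia.
  replace (S (S v) + 1 + v)%nat with (S (S (2 * v + 1))) by lia.
  replace (S v + 1 + v)%nat with (S (2 * v + 1)) by lia.
  replace (2 * S v + 1)%nat with (S (S (2 * v + 1))) by lia.
  repeat rewrite ?frS2, ?frS. rewrite fr0. inr_simpl.
  field. repeat split; try apply fr_nz; generalize (pos_INR v); intros; nra.
Qed.

Lemma Gzc0 t : Gzc (S t) 0 = -1.
Proof.
  unfold Gzc, WW, KK. replace (S t - 1 - 0)%nat with t by lia.
  replace (S t - 0)%nat with (S t) by lia.
  replace (S t + 1 + 0)%nat with (S (S t)) by lia.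
  repeat rewrite ?frS2, ?frS. inr_simpl.
  field. repeat split; try apply fr_nz; generalize (pos_INR t); intros; nra.
Qed.

Lemma ZZ_rec t : (2 * INR (S t) + 3) * ZZ (S (S t)) = (2 * INR (S t) + 2) * ZZ (S t) + 1.
Proof.
  assert (H : sumR (S t) (fun v => (2 * INR (S t) + 3) * (KK v * WW (S (S t)) v) - (2 * INR (S t) + 2) * (KK v * WW (S t) v))
              = Gzend (S t) + 1).
  { rewrite (sumR_ext (S t) _ (fun v => Gzx (S t) (S v) - Gzx (S t) v)).
    - rewrite sumR_tele. unfold Gzx.
      rewrite (proj2 (Nat.ltb_ge (S t) (S t))) by lia. rewrite (proj2 (Nat.ltb_lt 0 (S t))) by lia.
      rewrite Gzc0. ring.
    - intros v Hv. unfold Gzx. destruct (Nat.eq_dec v t) as [->|Hne].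
      + rewrite (proj2 (Nat.ltb_ge (S t) (S t))) by lia. rewrite (proj2 (Nat.ltb_lt t (S t))) by lia.
        apply zcert_last.
      + destruct (Nat.lt_exists_pred 0 (t - v) ltac:(lia)) as [m [Hm _]].
        replace t with (S (v + m)) by lia.
        rewrite (proj2 (Nat.ltb_lt (S v) (S (S (v + m))))) by lia. rewrite (proj2 (Nat.ltb_lt v (S (S (v + m))))) by lia.
        apply zcert. }
  assert (Hl : (2 * INR (S t) + 3) * (KK (S t) * WW (S (S t)) (S t)) + Gzend (S t) = 0).
  { unfold Gzend, WW, KK. replace (S (S t) - 1 - S t)%nat with 0%nat by lia.
    replace (S (S t) + 1 + S t)%nat with (S (2 * S t + 1)) by lia.
    repeat rewrite ?frS2, ?frS. rewrite fr0. inr_simpl.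
    field. repeat split; try apply fr_nz; generalize (pos_INR t); intros; nra. }
  unfold ZZ. change (sumR (S (S t)) (fun v => KK v * WW (S (S t)) v)) with
    (sumR (S t) (fun v => KK v * WW (S (S t)) v) + KK (S t) * WW (S (S t)) (S t)).
  rewrite (sumR_ext (S t) _ (fun v => (2 * INR (S t) + 3) * (KK v * WW (S (S t)) v) + (- (2 * INR (S t) + 2)) * (KK v * WW (S t) v))) in H by (intros; ring).
  rewrite sumR_lin in H. lra.
Qed.

Lemma Z_eq t : ZZ t = 1 - ff t.
Proof.
  induction t as [|t IH].
  - unfold ZZ, ff. simpl. unfold fr. simpl. field.
  - destruct t as [|t].
    + unfold ZZ, ff, WW, KK. cbn [sumR]. replace (1 - 1 - 0)%nat with 0%nat by lia.
      replace (1 + 1 + 0)%nat with 2%nat by lia. replace (2 * 1 + 1)%nat with 3%nat by lia.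
      unfold fr. simpl. field.
    + assert (Hr := ZZ_rec t). rewrite IH in Hr.
      assert (Hf : (2 * INR (S t) + 3) * ff (S (S t)) = (2 * INR (S t) + 2) * ff (S t)).
      { unfold ff. replace (2 * S (S t) + 1)%nat with (S (S (2 * S t + 1))) by lia.
        repeat rewrite ?frS2, ?frS. inr_simpl. simpl pow.
        field. repeat split; try apply fr_nz; generalize (pos_INR t); intros; nra. }
      assert (0 < 2 * INR (S t) + 3) by (generalize (pos_INR (S t)); lra).
      apply Rmult_eq_reg_l with (2 * INR (S t) + 3); lra.
Qed.

Definition ce (n : nat) : R := (alpha ^ n + (- alpha) ^ n) / (2 * fr n).
Definition se (n : nat) : R := (alpha ^ n - (- alpha) ^ n) / (2 * fr n).
Definition zz : R := PI ^ 2 / 36.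
Definition aa (u : nat) : R := zz ^ u / fr (2 * u).
Definition AA (v : nat) : R := sumR (S v) aa.

Lemma fr_S n : fr (S n) = INR (S n) * fr n.
Proof. unfold fr. rewrite fact_simpl, mult_INR. reflexivity. Qed.

Lemma alpha_pos : 0 < alpha.
Proof. unfold alpha. generalize PI_RGT_0; lra. Qed.
Lemma zz_alpha : zz = alpha ^ 2.
Proof. unfold zz, alpha. field. Qed.

Lemma Un_cv_ext (u v : nat -> R) l : (forall n, u n = v n) -> Un_cv u l -> Un_cv v l.
Proof. intros E H eps He. destruct (H eps He) as [N HN]. exists N. intros n Hn. rewrite <- E. auto. Qed.

Lemma Un_cv_const c : Un_cv (fun _ => c) c.
Proof. intros eps He. exists 0%nat. intros. unfold Rdist. rewrite Rminus_diag, Rabs_R0. lra. Qed.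

Lemma exp_cv x : Un_cv (sum_f_R0 (fun i => / INR (fact i) * x ^ i)) (exp x).
Proof. unfold exp. destruct (exist_exp x) as [l Hl]. simpl. exact Hl. Qed.

Lemma sum_ce_eq N : sum_f_R0 ce N =
  (sum_f_R0 (fun i => / INR (fact i) * alpha ^ i) N + sum_f_R0 (fun i => / INR (fact i) * (- alpha) ^ i) N) * / 2.
Proof.
  induction N as [|N IH].
  - simpl. unfold ce, fr. simpl. field.
  - change (sum_f_R0 ce (S N)) with (sum_f_R0 ce N + ce (S N)). rewrite IH.
    change (sum_f_R0 (fun i => / INR (fact i) * alpha ^ i) (S N)) with (sum_f_R0 (fun i => / INR (fact i) * alpha ^ i) N + / INR (fact (S N)) * alpha ^ (S N)).
    change (sum_f_R0 (fun i => / INR (fact i) * (- alpha) ^ i) (S N)) with (sum_f_R0 (fun i => / INR (fact i) * (- alpha) ^ i) N + / INR (fact (S N)) * (- alpha) ^ (S N)).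
    unfold ce, fr. field. apply INR_fact_neq_0.
Qed.
Lemma sum_se_eq N : sum_f_R0 se N =
  (sum_f_R0 (fun i => / INR (fact i) * alpha ^ i) N - sum_f_R0 (fun i => / INR (fact i) * (- alpha) ^ i) N) * / 2.
Proof.
  induction N as [|N IH].
  - simpl. unfold se, fr. simpl. field.
  - change (sum_f_R0 se (S N)) with (sum_f_R0 se N + se (S N)). rewrite IH.
    change (sum_f_R0 (fun i => / INR (fact i) * alpha ^ i) (S N)) with (sum_f_R0 (fun i => / INR (fact i) * alpha ^ i) N + / INR (fact (S N)) * alpha ^ (S N)).
    change (sum_f_R0 (fun i => / INR (fact i) * (- alpha) ^ i) (S N)) with (sum_f_R0 (fun i => / INR (fact i) * (- alpha) ^ i) N + / INR (fact (S N)) * (- alpha) ^ (S N)).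
    unfold se, fr. field. apply INR_fact_neq_0.
Qed.

Lemma cosh_cv : Un_cv (sum_f_R0 ce) (cosh alpha).
Proof.
  apply Un_cv_ext with (fun N => (sum_f_R0 (fun i => / INR (fact i) * alpha ^ i) N + sum_f_R0 (fun i => / INR (fact i) * (- alpha) ^ i) N) * / 2).
  { intro n. symmetry. apply sum_ce_eq. }
  unfold cosh. unfold Rdiv. apply CV_mult; [apply CV_plus; apply exp_cv | apply Un_cv_const].
Qed.
Lemma sinh_cv : Un_cv (sum_f_R0 se) (sinh alpha).
Proof.
  apply Un_cv_ext with (fun N => (sum_f_R0 (fun i => / INR (fact i) * alpha ^ i) N - sum_f_R0 (fun i => / INR (fact i) * (- alpha) ^ i) N) * / 2).
  { intro n. symmetry. apply sum_se_eq. }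
  unfold sinh. unfold Rdiv. apply CV_mult; [apply CV_minus; apply exp_cv | apply Un_cv_const].
Qed.

Lemma negpow_ge n : - alpha ^ n <= (- alpha) ^ n.
Proof.
  assert (H : Rabs ((- alpha) ^ n) = alpha ^ n).
  { rewrite <- RPow_abs, Rabs_Ropp, Rabs_pos_eq; [reflexivity | generalize alpha_pos; lra]. }
  pose proof (Rle_abs (- ((- alpha) ^ n))) as H2. rewrite Rabs_Ropp, H in H2. lra.
Qed.

Lemma ce_nonneg n : 0 <= ce n.
Proof.
  unfold ce. apply Rmult_le_pos. 2: { apply Rlt_le, Rinv_0_lt_compat. generalize (fr_pos n); lra. }
  generalize (negpow_ge n). lra.
Qed.

Lemma se_nonneg n : 0 <= se n.
Proof.
  unfold se. apply Rmult_le_pos. 2: { apply Rlt_le, Rinv_0_lt_compat. generalize (fr_pos n); lra. }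
  assert (H : Rabs ((- alpha) ^ n) = alpha ^ n).
  { rewrite <- RPow_abs, Rabs_Ropp, Rabs_pos_eq; [reflexivity | generalize alpha_pos; lra]. }
  generalize (Rle_abs ((- alpha) ^ n)). lra.
Qed.

Lemma se_S n : se (S n) = alpha / INR (S n) * ce n.
Proof.
  unfold se, ce. rewrite fr_S. simpl pow. field. split; [apply fr_nz|apply not_0_INR; lia].
Qed.

Lemma pow_neg_even k x : (- x) ^ (2 * k) = x ^ (2 * k).
Proof. rewrite !pow_mult. f_equal. ring. Qed.
Lemma pow_neg_odd k x : (- x) ^ (S (2 * k)) = - x ^ (S (2 * k)).
Proof. change ((- x) ^ (S (2 * k))) with (- x * (- x) ^ (2 * k)). rewrite pow_neg_even. change (x ^ (S (2 * k))) with (x * x ^ (2 * k)). ring. Qed.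

Lemma fr_ge2 n k : 2 * fr n <= fr (n + S (S k)).
Proof.
  apply Rle_trans with (fr (S (S n))).
  - rewrite !fr_S. rewrite !S_INR. generalize (pos_INR n) (fr_pos n). nra.
  - unfold fr. apply le_INR, fact_le. lia.
Qed.

Lemma ce_shift_le j n : ce (n + S (S (2 * j))) <= zz ^ (S j) / 2 * ce n.
Proof.
  unfold ce. replace (S (S (2 * j))) with (2 * S j)%nat by lia. rewrite !pow_add.
  rewrite pow_neg_even. rewrite zz_alpha, <- pow_mult.
  assert (Hp : 0 <= alpha ^ n + (- alpha) ^ n) by (generalize (negpow_ge n); lra).
  assert (Ha : 0 < alpha ^ (2 * S j)) by (apply pow_lt, alpha_pos).
  generalize (fr_ge2 n (2 * j)). replace (n + S (S (2 * j)))%nat with (n + 2 * S j)%nat by lia. intro Hf.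
  generalize (fr_pos n). intro Hn.
  replace ((alpha ^ n * alpha ^ (2 * S j) + (- alpha) ^ n * alpha ^ (2 * S j)) / (2 * fr (n + 2 * S j)))
    with (alpha ^ (2 * S j) * (alpha ^ n + (- alpha) ^ n) / (2 * fr (n + 2 * S j))) by (field; apply fr_nz).
  replace (alpha ^ (2 * S j) / 2 * ((alpha ^ n + (- alpha) ^ n) / (2 * fr n)))
    with (alpha ^ (2 * S j) * (alpha ^ n + (- alpha) ^ n) / (2 * (2 * fr n))) by (field; apply fr_nz).
  apply Rmult_le_compat_l. { apply Rmult_le_pos; lra. }
  apply Rinv_le_contravar; lra.
Qed.

Lemma sum_ce_AA v : sum_f_R0 ce (S (2 * v)) = AA v.
Proof.
  induction v as [|v IH].
  - unfold AA, aa, ce. simpl. unfold fr. simpl. field.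
  - replace (S (2 * S v)) with (S (S (S (2 * v)))) by lia.
    change (sum_f_R0 ce (S (S (S (2 * v))))) with (sum_f_R0 ce (S (2 * v)) + ce (S (S (2 * v))) + ce (S (S (S (2 * v))))).
    rewrite IH. unfold AA. change (sumR (S (S v)) aa) with (sumR (S v) aa + aa (S v)).
    replace (S (S (2 * v))) with (2 * S v)%nat by lia.
    unfold ce, aa. rewrite pow_neg_odd, pow_neg_even, zz_alpha, <- pow_mult. field. split; apply fr_nz.
Qed.

Definition PP (t : nat) : R := sumR t (fun u => aa u / (2 * INR u + 1)).

Lemma sum_se_PP t : sum_f_R0 se (2 * t) = alpha * PP t.
Proof.
  induction t as [|t IH].
  - unfold se, PP. simpl. unfold fr. simpl. field.
  - replace (2 * S t)%nat with (S (S (2 * t))) by lia.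
    change (sum_f_R0 se (S (S (2 * t)))) with (sum_f_R0 se (2 * t) + se (S (2 * t)) + se (S (S (2 * t)))).
    rewrite IH. unfold PP. change (sumR (S t) (fun u => aa u / (2 * INR u + 1))) with
      (sumR t (fun u => aa u / (2 * INR u + 1)) + aa t / (2 * INR t + 1)).
    replace (S (S (2 * t))) with (2 * S t)%nat by lia.
    unfold se, aa. rewrite pow_neg_odd, pow_neg_even, fr_S, zz_alpha, <- pow_mult.
    replace (INR (S (2 * t))) with (2 * INR t + 1) by (rewrite S_INR, mult_INR; simpl; ring).
    simpl pow. field. repeat split; try apply fr_nz; generalize (pos_INR t); lra.
Qed.

Lemma sum_shift f k N : sum_f_R0 f (N + S k) = sum_f_R0 f k + sum_f_R0 (fun n => f (n + S k)%nat) N.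
Proof.
  induction N as [|N IH].
  - simpl. reflexivity.
  - change (S N + S k)%nat with (S (N + S k)). simpl sum_f_R0 at 1. rewrite IH. simpl. ring.
Qed.

Lemma AA_le v : AA v <= cosh alpha.
Proof.
  rewrite <- sum_ce_AA. apply growing_ineq; [|apply cosh_cv].
  intro n. simpl. generalize (ce_nonneg (S n)). lra.
Qed.

Lemma PP_le t : alpha * PP t <= sinh alpha.
Proof.
  rewrite <- sum_se_PP. apply growing_ineq; [|apply sinh_cv].
  intro n. simpl. generalize (se_nonneg (S n)). lra.
Qed.

Lemma tail_ce v : cosh alpha - AA v <= zz ^ (S v) / 2 * cosh alpha.
Proof.
  apply Rle_cv_lim with (fun N => sum_f_R0 ce (N + S (S (2 * v))) - AA v) (fun N => zz ^ (S v) / 2 * sum_f_R0 ce N).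
  - intro N. rewrite sum_shift, sum_ce_AA.
    rewrite Rplus_comm. unfold Rminus. rewrite Rplus_assoc, Rplus_opp_r, Rplus_0_r.
    rewrite scal_sum. apply sum_Rle. intros n _. rewrite Rmult_comm. apply ce_shift_le.
  - apply CV_minus; [apply CV_shift'; apply cosh_cv | apply Un_cv_const].
  - apply CV_mult; [apply Un_cv_const | apply cosh_cv].
Qed.

Lemma tail_se t : sinh alpha - alpha * PP (S t) <= alpha / (2 * INR (S t) + 1) * (cosh alpha - AA t).
Proof.
  rewrite <- sum_se_PP, <- sum_ce_AA.
  replace (2 * S t)%nat with (S (S (2 * t))) by lia.
  apply Rle_cv_lim with (fun N => sum_f_R0 se (N + S (S (S (2 * t)))) - sum_f_R0 se (S (S (2 * t))))
    (fun N => alpha / (2 * INR (S t) + 1) * (sum_f_R0 ce (N + S (S (2 * t))) - sum_f_R0 ce (S (2 * t)))).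
  - intro N. rewrite (sum_shift se), (sum_shift ce).
    replace (sum_f_R0 se (S (S (2 * t))) + sum_f_R0 (fun n : nat => se (n + S (S (S (2 * t))))) N - sum_f_R0 se (S (S (2 * t))))
      with (sum_f_R0 (fun n : nat => se (n + S (S (S (2 * t))))) N) by ring.
    replace (sum_f_R0 ce (S (2 * t)) + sum_f_R0 (fun n : nat => ce (n + S (S (2 * t)))) N - sum_f_R0 ce (S (2 * t)))
      with (sum_f_R0 (fun n : nat => ce (n + S (S (2 * t)))) N) by ring.
    rewrite scal_sum. apply sum_Rle. intros n _.
    replace (n + S (S (S (2 * t))))%nat with (S (n + S (S (2 * t)))) by lia.
    rewrite se_S. rewrite (Rmult_comm (ce _)). apply Rmult_le_compat_r; [apply ce_nonneg|].
    unfold Rdiv. apply Rmult_le_compat_l; [generalize alpha_pos; lra|].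
    apply Rinv_le_contravar. { generalize (pos_INR t); rewrite S_INR; lra. }
    rewrite !S_INR, plus_INR, !S_INR, mult_INR. simpl. generalize (pos_INR n); lra.
  - apply CV_minus; [apply CV_shift'; apply sinh_cv | apply Un_cv_const].
  - apply CV_mult; [apply Un_cv_const|]. apply CV_minus; [apply CV_shift'; apply cosh_cv | apply Un_cv_const].
Qed.

Lemma rising_shift a m : rising a (S m) = a * rising (a + 1) m.
Proof.
  revert a. induction m as [|m IH]; intro a.
  - simpl. ring.
  - change (rising a (S (S m))) with (rising a (S m) * (a + INR (S m))).
    rewrite IH. change (rising (a + 1) (S m)) with (rising (a + 1) m * (a + 1 + INR m)).
    rewrite S_INR. ring.
Qed.

Lemma R1 s : rising (1 / 2 - INR s) (s + 1) = (-1) ^ s * fr (2 * s) / (2 * 4 ^ s * fr s).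
Proof.
  induction s as [|s IH].
  - simpl. unfold fr. simpl. field.
  - rewrite Nat.add_1_r, rising_shift.
    replace (1 / 2 - INR (S s) + 1) with (1 / 2 - INR s) by (rewrite S_INR; ring).
    replace (rising (1 / 2 - INR s) (S s)) with (rising (1 / 2 - INR s) (s + 1)) by (rewrite Nat.add_1_r; reflexivity).
    rewrite IH. replace (2 * S s)%nat with (S (S (2 * s))) by lia.
    rewrite frS2, frS. inr_simpl. simpl pow.
    field. repeat split; try apply fr_nz; try apply pow_nonzero; generalize (pos_INR s); intros; nra.
Qed.

Lemma falling_cf m : falling (-3/2) m = (-1) ^ m * fr (2 * m + 1) / (4 ^ m * fr m).
Proof.
  induction m as [|m IH].
  - simpl. unfold fr. simpl. field.
  - change (falling (-3/2) (S m)) with (falling (-3/2) m * (-3/2 - INR m)).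
    rewrite IH. replace (2 * S m + 1)%nat with (S (S (2 * m + 1))) by lia.
    rewrite frS2, frS. inr_simpl. simpl pow.
    field. repeat split; try apply fr_nz; try apply pow_nonzero; generalize (pos_INR m); intros; nra.
Qed.

Lemma R2 m : gbinom (-3/2) m = (-1) ^ m * fr (2 * m + 1) / (4 ^ m * fr m ^ 2).
Proof.
  unfold gbinom. rewrite falling_cf. fold (fr m). field. split; [apply fr_nz|apply pow_nonzero; lra].
Qed.

Lemma R3 s u : (u <= s)%nat -> (-1) ^ u * rising (- INR s) u = fr s / fr (s - u).
Proof.
  induction u as [|u IH]; intro H.
  - simpl. rewrite Nat.sub_0_r. field. apply fr_nz.
  - change (rising (- INR s) (S u)) with (rising (- INR s) u * (- INR s + INR u)).
    replace ((-1) ^ S u * (rising (- INR s) u * (- INR s + INR u))) with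
      (((-1) ^ u * rising (- INR s) u) * (INR s - INR u)) by (simpl; ring).
    rewrite IH by lia.
    replace (s - u)%nat with (S (s - S u)) by lia. rewrite frS.
    replace (INR s - INR u) with (INR (s - S u) + 1).
    + field. split; [apply fr_nz|generalize (pos_INR (s - S u)); lra].
    + rewrite minus_INR by lia. rewrite S_INR. ring.
Qed.

Definition gterm (t s u : nat) : R :=
  rising (1 / 2 - INR s) (s + 1) * gbinom (-3/2) (t - s - 1) *
  ((-1) ^ u * rising (- INR s) u / (INR (fact (s + u + 1)) * INR (fact (2 * u))) * (PI ^ 2 / 36) ^ u).

Lemma sumR_swap t h : sumR t (fun s => sumR (S s) (fun u => h s u)) =
  sumR t (fun u => sumR (t - u) (fun k => h (u + k)%nat u)).
Proof.
  induction t as [|t IH]; [reflexivity|].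
  change (sumR (S t) (fun s => sumR (S s) (fun u => h s u))) with
    (sumR t (fun s => sumR (S s) (fun u => h s u)) + sumR (S t) (fun u => h t u)).
  rewrite IH. change (sumR (S t) (fun u => sumR (S t - u) (fun k => h (u + k)%nat u))) with
    (sumR t (fun u => sumR (S t - u) (fun k => h (u + k)%nat u)) + sumR (S t - t) (fun k => h (t + k)%nat t)).
  rewrite (sumR_ext t (fun u => sumR (S t - u) (fun k => h (u + k)%nat u))
    (fun u => sumR (t - u) (fun k => h (u + k)%nat u) + h t u)).
  - rewrite sumR_plus. replace (S t - t)%nat with 1%nat by lia. cbn [sumR].
    change (sumR (S t) (fun u => h t u)) with (sumR t (fun u => h t u) + h t t).
    rewrite Nat.add_0_r. change (sumR t (fun u : nat => h t u)) with (sumR t (h t)). ring.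
  - intros u Hu. replace (S t - u)%nat with (S (t - u)) by lia. cbn [sumR].
    replace (u + (t - u))%nat with t by lia. reflexivity.
Qed.

Lemma S2_swap t : S2 t = sumR t (fun u => sumR (t - u) (fun k => gterm t (u + k)%nat u)).
Proof.
  unfold S2. rewrite <- (sumR_swap t (gterm t)).
  apply sumR_ext. intros s Hs. unfold gterm.
  rewrite <- sumR_scal. assert (E : forall f, sumR (s + 1) f = sumR (S s) f) by (intros; rewrite Nat.add_1_r; reflexivity). apply E.
Qed.


Lemma gterm_closed u k j : gterm (u + 1 + k + j) (u + k) u =
  zz ^ u * (-1) ^ (u + k + j) / (4 ^ (u + 1 + k + j) * fr (2 * u)) * Fk u (k + j) k.
Proof.
  unfold gterm, Fk, zz. rewrite R1.
  replace (u + 1 + k + j - (u + k) - 1)%nat with j by lia. rewrite R2.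
  rewrite R3 by lia. replace (u + k - u)%nat with k by lia. replace (k + j - k)%nat with j by lia.
  replace (u + k + u + 1)%nat with (2 * u + k + 1)%nat by lia.
  replace (2 * (u + k))%nat with (2 * u + 2 * k)%nat by lia.
  fold (fr (2 * u + k + 1)) (fr (2 * u)).
  rewrite !pow_add.
  field. repeat split; try apply fr_nz; try apply pow_nonzero; lra.
Qed.

Lemma inner_closed u n : sumR (S n) (fun k => gterm (u + 1 + n) (u + k) u) =
  zz ^ u * (-1) ^ (u + n) / (4 ^ (u + 1 + n) * fr (2 * u)) * sumR (S n) (Fk u n).
Proof.
  rewrite <- sumR_scal. apply sumR_ext. intros k Hk.
  destruct (Nat.le_exists_sub k n ltac:(lia)) as [j [Hj _]]. subst n.
  replace (u + 1 + (j + k))%nat with (u + 1 + k + j)%nat by lia.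
  replace (u + (j + k))%nat with (u + k + j)%nat by lia.
  replace (j + k)%nat with (k + j)%nat by lia.
  apply gterm_closed.
Qed.

Lemma Rj_rel u n j : (j <= n)%nat ->
  (-1) ^ (u + n) / 4 ^ (u + 1 + n) * Rj u n j = - gbinom (-3/2) (u + 1 + n) * (KK (u + j) * WW (u + 1 + n) (u + j)).
Proof.
  intro H. destruct (Nat.le_exists_sub j n H) as [i [Hi _]]. subst n.
  unfold Rj, WW. rewrite R2.
  replace (i + j - j)%nat with i by lia.
  replace (u + 1 + (i + j) - 1 - (u + j))%nat with i by lia.
  replace (u + 1 + (i + j) + 1 + (u + j))%nat with (2 * u + (i + j) + j + 2)%nat by lia.
  replace (2 * (u + 1 + (i + j)) + 1)%nat with (2 * u + 2 * (i + j) + 3)%nat by lia.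
  replace (u + 1 + (i + j))%nat with (S (u + (i + j))) by lia.
  simpl pow.
  field. repeat split; try apply fr_nz; try apply pow_nonzero; lra.
Qed.


Lemma sumR_scalr N a f : sumR N (fun k => f k * a) = sumR N f * a.
Proof. induction N as [|N IH]; simpl; [ring|rewrite IH; ring]. Qed.

Lemma S2_closed t : S2 t = sumR t (fun v => (- gbinom (-3/2) t * (KK v * WW t v)) * AA v).
Proof.
  rewrite S2_swap.
  transitivity (sumR t (fun u => sumR (t - u) (fun j => aa u * (- gbinom (-3/2) t * (KK (u + j) * WW t (u + j)))))).
  - apply sumR_ext. intros u Hu.
    destruct (Nat.le_exists_sub (u + 1) t ltac:(lia)) as [n [Hn _]]. subst t.
    replace (n + (u + 1) - u)%nat with (S n) by lia.
    replace (n + (u + 1))%nat with (u + 1 + n)%nat by lia.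
    rewrite inner_closed, Iprime.
    rewrite <- sumR_scal. apply sumR_ext. intros j Hj.
    rewrite <- Rj_rel by lia. unfold aa. field. repeat split; try apply fr_nz; apply pow_nonzero; lra.
  - rewrite <- (sumR_swap t (fun v u => aa u * (- gbinom (-3/2) t * (KK v * WW t v)))).
    apply sumR_ext. intros v Hv. unfold AA. rewrite (sumR_scalr (S v) _ aa). ring.
Qed.

Lemma sumR_le N f g : (forall k, (k < N)%nat -> f k <= g k) -> sumR N f <= sumR N g.
Proof.
  induction N as [|N IH]; intro H; simpl; [lra|].
  apply Rplus_le_compat; [apply IH; intros; apply H; lia | apply H; lia].
Qed.

Lemma sumR_nonneg N f : (forall k, (k < N)%nat -> 0 <= f k) -> 0 <= sumR N f.
Proof.
  intro H. replace 0 with (sumR N (fun _ => 0)). apply sumR_le; auto.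
  clear H. induction N; simpl; [reflexivity| rewrite IHN; ring].
Qed.

Lemma sum_expand N (k w a : nat -> R) c :
  sumR N (fun v => k v * (1 - w v) * (c - a v)) =
  c * sumR N k - sumR N (fun v => k v * a v) - c * sumR N (fun v => k v * w v) + sumR N (fun v => k v * w v * a v).
Proof. induction N as [|N IH]; simpl; [ring|rewrite IH; ring]. Qed.

Lemma KK_sum N : sumR N KK = 1 - 1 / (2 * INR N + 1).
Proof.
  induction N as [|N IH]; simpl sumR.
  - simpl. field.
  - rewrite IH. unfold KK. rewrite S_INR. field. generalize (pos_INR N); intros; split; lra.
Qed.

Lemma KKA_sum N : sumR N (fun v => KK v * AA v) = PP N - sumR N aa / (2 * INR N + 1).
Proof.
  induction N as [|N IH].
  - simpl. unfold PP. simpl. field.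
  - change (sumR (S N) (fun v => KK v * AA v)) with (sumR N (fun v => KK v * AA v) + KK N * AA N).
    rewrite IH. unfold PP. change (sumR (S N) (fun u => aa u / (2 * INR u + 1))) with
      (sumR N (fun u => aa u / (2 * INR u + 1)) + aa N / (2 * INR N + 1)).
    change (sumR (S N) aa) with (sumR N aa + aa N). unfold AA. change (sumR (S N) aa) with (sumR N aa + aa N).
    unfold KK. rewrite S_INR. field. generalize (pos_INR N); intros; split; lra.
Qed.

Lemma aa_nonneg u : 0 <= aa u.
Proof.
  unfold aa. apply Rmult_le_pos; [|apply Rlt_le, Rinv_0_lt_compat, fr_pos].
  apply pow_le. unfold zz. generalize PI_RGT_0; intros; nra.
Qed.

Lemma AA_ge1 v : 1 <= AA v.
Proof.
  induction v as [|v IH].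
  - unfold AA, aa. simpl. unfold fr. simpl. lra.
  - unfold AA in *. change (sumR (S (S v)) aa) with (sumR (S v) aa + aa (S v)).
    generalize (aa_nonneg (S v)); lra.
Qed.

Lemma WW_0 t : WW (S t) 0 = (INR t + 1) / (INR t + 2).
Proof.
  unfold WW. replace (S t - 1 - 0)%nat with t by lia. replace (S t + 1 + 0)%nat with (S (S t)) by lia.
  repeat rewrite ?frS2, ?frS. field. generalize (pos_INR t) (fr_pos t); intros; split; lra.
Qed.

Lemma WW_step v m : WW (S (S (v + m))) (S v) =
  WW (S (S (v + m))) v * (INR m + 1) / (INR (S (S (v + m))) + INR v + 2).
Proof.
  unfold WW.
  replace (S (S (v + m)) - 1 - S v)%nat with m by lia.
  replace (S (S (v + m)) - 1 - v)%nat with (S m) by lia.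
  replace (S (S (v + m)) + 1 + S v)%nat with (S (S (S (v + m)) + 1 + v)) by lia.
  repeat rewrite ?frS. inr_simpl.
  field. repeat split; try apply fr_nz; generalize (pos_INR v) (pos_INR m); intros; nra.
Qed.

Lemma WW_bounds v : forall t, (S v <= t)%nat ->
  0 <= WW t v <= 1 /\ 1 - WW t v <= (INR v + 1) ^ 2 / INR t.
Proof.
  induction v as [|v IH]; intros t Ht.
  - destruct t as [|t]; [lia|]. rewrite WW_0. rewrite S_INR. simpl INR.
    generalize (pos_INR t); intro. split; [split|].
    + apply Rmult_le_pos; [lra|apply Rlt_le, Rinv_0_lt_compat; lra].
    + apply Rmult_le_reg_r with (INR t + 2); [lra|]. unfold Rdiv. rewrite Rmult_assoc, Rinv_l; lra.
    + replace (1 - (INR t + 1) / (INR t + 2)) with (1 / (INR t + 2)) by (field; lra).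
      replace ((0 + 1) ^ 2 / (INR t + 1)) with (1 / (INR t + 1)) by (field; lra).
      apply Rmult_le_compat_l; [lra|]. apply Rinv_le_contravar; lra.
  - destruct (Nat.le_exists_sub (S (S v)) t Ht) as [m [Hm _]].
    replace t with (S (S (v + m))) in * by lia. clear Hm.
    destruct (IH (S (S (v + m))) ltac:(lia)) as [[H0 H1] H2].
    rewrite WW_step. set (T := INR (S (S (v + m)))) in *.
    assert (HT : T = INR v + INR m + 2) by (unfold T; inr_simpl; ring).
    generalize (pos_INR v) (pos_INR m); intros Pv Pm.
    set (W := WW (S (S (v + m))) v) in *.
    assert (Hr0 : 0 <= (INR m + 1) / (T + INR v + 2)) by (apply Rmult_le_pos; [lra|apply Rlt_le, Rinv_0_lt_compat; lra]).
    assert (Hr1 : (INR m + 1) / (T + INR v + 2) <= 1).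
    { apply Rmult_le_reg_r with (T + INR v + 2); [lra|]. unfold Rdiv. rewrite Rmult_assoc, Rinv_l; lra. }
    assert (Hr2 : 1 - (INR m + 1) / (T + INR v + 2) <= (2 * INR v + 3) / T).
    { replace (1 - (INR m + 1) / (T + INR v + 2)) with ((2 * INR v + 3) / (T + INR v + 2)) by (rewrite HT; field; lra).
      apply Rmult_le_compat_l; [lra|]. apply Rinv_le_contravar; lra. }
    replace (W * (INR m + 1) / (T + INR v + 2)) with (W * ((INR m + 1) / (T + INR v + 2))) by (field; lra).
    split; [split|].
    + apply Rmult_le_pos; lra.
    + replace 1 with (1 * 1) by ring. apply Rmult_le_compat; lra.
    + rewrite S_INR.
      replace ((INR v + 1 + 1) ^ 2 / T) with ((INR v + 1) ^ 2 / T + (2 * INR v + 3) / T) by (field; lra).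
      assert (W * (1 - (INR m + 1) / (T + INR v + 2)) <= (2 * INR v + 3) / T).
      { apply Rle_trans with (1 * (1 - (INR m + 1) / (T + INR v + 2))); [apply Rmult_le_compat_r; lra | lra]. }
      nra.
Qed.

Lemma KK_sq v : KK v * (INR v + 1) ^ 2 <= 2 / 3.
Proof.
  unfold KK. generalize (pos_INR v); intro.
  apply Rmult_le_reg_r with ((2 * INR v + 1) * (2 * INR v + 3)); [nra|].
  replace (2 / ((2 * INR v + 1) * (2 * INR v + 3)) * (INR v + 1) ^ 2 * ((2 * INR v + 1) * (2 * INR v + 3)))
    with (2 * (INR v + 1) ^ 2) by (field; nra).
  nra.
Qed.

Lemma geo_sum N : sumR N (fun v => zz ^ (S v)) * (1 - zz) = zz - zz ^ (S N).
Proof.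
  induction N as [|N IH]; [simpl; ring|].
  change (sumR (S N) (fun v => zz ^ (S v))) with (sumR N (fun v => zz ^ (S v)) + zz ^ (S N)).
  rewrite Rmult_plus_distr_r, IH. simpl. ring.
Qed.

Lemma zz_bounds : 0 < zz <= 4 / 9.
Proof. unfold zz. generalize PI_RGT_0 PI_4; intros; split; nra. Qed.

Lemma gb_inv t : (-1) ^ t / gbinom (-3/2) t = ff t.
Proof.
  rewrite R2. unfold ff.
  assert (H : (-1) ^ t * (-1) ^ t = 1) by (rewrite <- Rpow_mult_distr; replace (-1 * -1) with 1 by ring; apply pow1).
  field_simplify_eq; [|repeat split; try apply fr_nz; try apply pow_nonzero; try lra].
  reflexivity.
Qed.

Theorem mainTheorem11 : forall t : nat, (1 <= t)%nat ->
  - (11 / (10 * INR t)) <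
    S2 t / gbinom (-3/2) t - (-1) ^ t / gbinom (-3/2) t * cosh alpha
      + sinh alpha / alpha
  /\
  S2 t / gbinom (-3/2) t - (-1) ^ t / gbinom (-3/2) t * cosh alpha
      + sinh alpha / alpha < 1 / INR t.
Proof.
  intros t Ht. destruct t as [|t']; [lia|].
  set (T := INR (S t')).
  assert (HT : 1 <= T) by (unfold T; rewrite S_INR; generalize (pos_INR t'); lra).
  set (gb := gbinom (-3/2) (S t')).
  assert (Hgb : gb <> 0).
  { unfold gb. rewrite R2. unfold Rdiv. apply Rmult_integral_contrapositive. split.
    - apply Rmult_integral_contrapositive. split; [apply pow_nonzero; lra|apply fr_nz].
    - apply Rinv_neq_0_compat. apply Rmult_integral_contrapositive. split; [apply pow_nonzero; lra|apply pow_nonzero, fr_nz]. }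
  set (c := cosh alpha). set (sh := sinh alpha / alpha).
  set (X := sumR (S t') (fun v => KK v * WW (S t') v * AA v)).
  assert (HS : S2 (S t') / gb = - X).
  { rewrite S2_closed. fold gb. unfold X.
    rewrite (sumR_ext (S t') _ (fun v => (- gb) * (KK v * WW (S t') v * AA v))) by (intros; ring).
    rewrite sumR_scal. field. exact Hgb. }
  assert (Hf : (-1) ^ (S t') / gb = 1 - ZZ (S t')).
  { unfold gb. rewrite gb_inv, Z_eq. ring. }
  set (Y := sumR (S t') (fun v => KK v * (1 - WW (S t') v) * (c - AA v))).
  assert (HE : S2 (S t') / gb - (-1) ^ (S t') / gb * c + sh
               = (sh - PP (S t')) - (c - AA t') / (2 * T + 1) - Y).
  { rewrite HS, Hf. unfold Y. rewrite sum_expand. fold X. unfold ZZ.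
    rewrite KK_sum, KKA_sum. fold T. change (sumR (S t') aa) with (AA t').
    field. lra. }
  fold gb. rewrite HE.
  assert (Ha := alpha_pos).
  assert (Hc1 : 1 <= c) by (generalize (AA_le 0) (AA_ge1 0); unfold c; lra).
  assert (Hc2 : c <= 9 / 7).
  { generalize (tail_ce 0) zz_bounds. unfold c. simpl pow. rewrite Rmult_1_r.
    assert (AA 0 = 1) by (unfold AA, aa; simpl; unfold fr; simpl; field). intros; nra. }
  assert (Hsh1 : 0 <= sh - PP (S t')).
  { unfold sh. generalize (PP_le (S t')). intro H.
    apply Rmult_le_reg_l with alpha; [lra|]. rewrite Rmult_0_r.
    replace (alpha * (sinh alpha / alpha - PP (S t'))) with (sinh alpha - alpha * PP (S t')) by (field; lra). lra. }
  assert (Hsh2 : sh - PP (S t') <= (c - AA t') / (2 * T + 1)).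
  { unfold sh, c, T. generalize (tail_se t'). intro H.
    apply Rmult_le_reg_l with alpha; [lra|].
    replace (alpha * (sinh alpha / alpha - PP (S t'))) with (sinh alpha - alpha * PP (S t')) by (field; lra).
    replace (alpha * ((cosh alpha - AA t') / (2 * INR (S t') + 1))) with
      (alpha / (2 * INR (S t') + 1) * (cosh alpha - AA t')) by (field; fold T; lra). exact H. }
  assert (HAt : 1 <= AA t') by apply AA_ge1.
  assert (HAc : AA t' <= c) by apply AA_le.
  assert (HY0 : 0 <= Y).
  { unfold Y. apply sumR_nonneg. intros v Hv.
    destruct (WW_bounds v (S t') ltac:(lia)) as [[W0 W1] _].
    apply Rmult_le_pos; [apply Rmult_le_pos|].
    - unfold KK. generalize (pos_INR v); intro. apply Rmult_le_pos; [lra|]. apply Rlt_le, Rinv_0_lt_compat; nra.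
    - lra.
    - generalize (AA_le v); unfold c; lra. }
  assert (HY1 : Y <= c / (3 * T) * sumR (S t') (fun v => zz ^ (S v))).
  { unfold Y. rewrite <- sumR_scal. apply sumR_le. intros v Hv.
    destruct (WW_bounds v (S t') ltac:(lia)) as [[W0 W1] W2]. fold T in W2.
    assert (K0 : 0 <= KK v).
    { unfold KK. generalize (pos_INR v); intro. apply Rmult_le_pos; [lra|]. apply Rlt_le, Rinv_0_lt_compat; nra. }
    assert (KW : KK v * (1 - WW (S t') v) <= 2 / 3 / T).
    { apply Rle_trans with (KK v * ((INR v + 1) ^ 2 / T)); [apply Rmult_le_compat_l; lra|].
      replace (KK v * ((INR v + 1) ^ 2 / T)) with (KK v * (INR v + 1) ^ 2 / T) by (field; lra).
      unfold Rdiv. apply Rmult_le_compat_r; [apply Rlt_le, Rinv_0_lt_compat; lra|]. apply KK_sq. }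
    assert (CA : c - AA v <= zz ^ (S v) / 2 * c) by apply tail_ce.
    assert (CA0 : 0 <= c - AA v) by (generalize (AA_le v); unfold c; lra).
    apply Rle_trans with (2 / 3 / T * (zz ^ (S v) / 2 * c)).
    - apply Rmult_le_compat; try lra. apply Rmult_le_pos; lra.
    - replace (2 / 3 / T * (zz ^ S v / 2 * c)) with (c / (3 * T) * zz ^ S v) by (field; lra). lra. }
  assert (Hg : sumR (S t') (fun v => zz ^ (S v)) <= 4 / 5).
  { generalize (geo_sum (S t')) zz_bounds. intros H [Hz1 Hz2].
    assert (0 <= sumR (S t') (fun v => zz ^ (S v))) by (apply sumR_nonneg; intros; apply pow_le; lra).
    assert (0 < zz ^ (S (S t'))) by (apply pow_lt; lra). nra. }
  set (Q := 1 / T).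
  assert (HQ : 0 < Q) by (unfold Q; apply Rdiv_lt_0_compat; lra).
  assert (HX1 : (c - AA t') / (2 * T + 1) <= 2 / 7 * Q).
  { unfold Q. apply Rle_trans with ((c - 1) / T).
    - unfold Rdiv. apply Rmult_le_compat; try lra. apply Rlt_le, Rinv_0_lt_compat; lra.
      apply Rinv_le_contravar; lra.
    - unfold Rdiv. rewrite Rmult_1_l. apply Rmult_le_compat_r; [apply Rlt_le, Rinv_0_lt_compat; lra| lra]. }
  assert (HY2 : Y <= 12 / 35 * Q).
  { apply Rle_trans with (c / (3 * T) * sumR (S t') (fun v => zz ^ (S v))); [exact HY1|].
    replace (c / (3 * T)) with (c / 3 * Q) by (unfold Q; field; lra).
    assert (0 <= sumR (S t') (fun v => zz ^ (S v))) by (apply sumR_nonneg; intros; apply pow_le; generalize zz_bounds; lra).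
    assert (c / 3 * sumR (S t') (fun v => zz ^ (S v)) <= 12 / 35) by nra.
    nra. }
  replace (11 / (10 * T)) with (11 / 10 * Q) by (unfold Q; field; lra).
  split; lra.
Qed.
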